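(* Let $(\Lambda,\Pi,\perp,\mathrm{push})$ be a realizability lattice equipped with a map $\mathrm{app}:\Lambda\times\Lambda\to\Lambda$, $(t,s)\mapsto ts$. The following are equivalent: (1) for all $t,s\in\Lambda$, $\pi\in\Pi$: if $t\perp s\cdot\pi$ then $ts\perp\pi$; (2) $P\ast L\subseteq P\,\clubsuit\,L$ for all $L\subseteq\Lambda$, $P\subseteq\Pi$; (3) $P\ast_\perp L\subseteq P\,\clubsuit\,L$ for all $L\subseteq\Lambda$, $P\subseteq\Pi$; (4) for all $P\subseteq\Pi$, $L\subseteq\Lambda$: if $t\in{}^\perp P$ and $\ell\in L$ then $t\ell$ is orthogonal to every element of $P\ast L$ (and hence to every element of $P\ast_\bullet L\subseteq P\ast L$).
   Context: A realizability lattice consists of sets $\Lambda,\Pi$, a relation $\perp\subseteq\Lambda\times\Pi$ (write $t\perp\pi$) and a map $\mathrm{push}:\Lambda\times\Pi\to\Pi$, written $t\cdot\pi$. Polars: $L^\perp=\{\pi:\forall t\in L,\ t\perp\pi\}$, ${}^\perp P=\{t:\forall\pi\in P,\ t\perp\pi\}$; $\overline P=({}^\perp P)^\perp$. Define $P\ast L=\{\pi\in\Pi: t\cdot\pi\in P\ \forall t\in L\}$, $P\ast_\perp L=\overline{P\ast L}$, $P\ast_\bullet L=\{\pi\in\Pi:t\cdot\pi'\in P\ \forall t\in L,\ \pi'\in\overline{\{\pi\}}\}$, and $P\,\clubsuit\,L=(\{t\ell: t\in{}^\perp P,\ \ell\in L\})^\perp$. *)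

(* Defs.v *)
Set Implicit Arguments.

Section RealizabilityLattice.
Variables (Lam Pi : Type) (perp : Lam -> Pi -> Prop) (push : Lam -> Pi -> Pi).

Definition polL (L : Lam -> Prop) : Pi -> Prop :=
  fun pi => forall t, L t -> perp t pi.
Definition polP (P : Pi -> Prop) : Lam -> Prop :=
  fun t => forall pi, P pi -> perp t pi.
Definition closP (P : Pi -> Prop) : Pi -> Prop := polL (polP P).

Definition star (P : Pi -> Prop) (L : Lam -> Prop) : Pi -> Prop :=
  fun pi => forall t, L t -> P (push t pi).
Definition star_perp (P : Pi -> Prop) (L : Lam -> Prop) : Pi -> Prop :=
  closP (star P L).
Definition star_bullet (P : Pi -> Prop) (L : Lam -> Prop) : Pi -> Prop :=
  fun pi => forall t pi', L t -> closP (fun x => x = pi) pi' -> P (push t pi').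
Definition club (app : Lam -> Lam -> Lam) (P : Pi -> Prop) (L : Lam -> Prop)
  : Pi -> Prop :=
  polL (fun u => exists t l, polP P t /\ L l /\ u = app t l).

End RealizabilityLattice.

(* Main.v *)
Require Import Defs.

Theorem mainTheorem4 (Lam Pi : Type) (perp : Lam -> Pi -> Prop)
  (push : Lam -> Pi -> Pi) (app : Lam -> Lam -> Lam) :
  let c1 := forall (t s : Lam) (pi : Pi), perp t (push s pi) -> perp (app t s) pi in
  let c2 := forall (L : Lam -> Prop) (P : Pi -> Prop) (pi : Pi),
      star push P L pi -> club perp app P L pi in
  let c3 := forall (L : Lam -> Prop) (P : Pi -> Prop) (pi : Pi),
      star_perp perp push P L pi -> club perp app P L pi in
  let c4 := forall (P : Pi -> Prop) (L : Lam -> Prop) (t l : Lam),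
      polP perp P t -> L l ->
      (forall pi, star push P L pi -> perp (app t l) pi) /\
      (forall pi, star_bullet perp push P L pi -> perp (app t l) pi) in
  (c1 <-> c2) /\ (c1 <-> c3) /\ (c1 <-> c4).
Proof.
  intros c1 c2 c3 c4.
  assert (H12 : c1 -> c2).
  { intros H1 L P pi Hs u [t [l [Ht [Hl ->]]]]. apply H1, Ht, Hs, Hl. }
  assert (H21 : c2 -> c1).
  { intros H2 t s pi Hp.
    apply (H2 (fun x => x = s) (fun x => x = push s pi) pi).
    - intros t' ->. reflexivity.
    - exists t, s. repeat split. intros p ->. exact Hp. }
  assert (Hcl : forall L P pi, star push P L pi -> star_perp perp push P L pi).
  { intros L P pi Hs t Ht. apply Ht, Hs. }
  split; [split; assumption|split; split].
  - intros H1 L P pi Hs u [t [l [Ht [Hl ->]]]]. apply Hs.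
    intros pi' Hpi'. apply H1, Ht, Hpi', Hl.
  - intros H3. apply H21. intros L P pi Hs. apply H3, Hcl, Hs.
  - intros H1 P L t l Ht Hl. split.
    + intros pi Hs. apply H1, Ht, Hs, Hl.
    + intros pi Hb. apply H1, Ht. apply Hb; [exact Hl|].
      intros t' Ht'. apply Ht'. reflexivity.
  - intros H4 t s pi Hp.
    refine (proj1 (H4 (fun x => x = push s pi) (fun x => x = s) t s _ eq_refl) pi _).
    + intros p ->. exact Hp.
    + intros t' ->. reflexivity.
Qed.
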